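(* Let $\alpha\in(0,1)$ be irrational. (i) For every $n\in\mathbb N_0$ there exists a unique $(n,\alpha)$-partition of $v_{\alpha,0}$. (ii) For every $n\in\mathbb N_0$ and every $\theta\in[0,1)$ there exists a unique $(n,\alpha)$-partition of $v_{\alpha,\theta}$.
   Context: $\mathbb N_0=\{0,1,2,\ldots\}$. $v_{\alpha,\theta}(k)=\chi_{[1-\alpha,1)}(k\alpha+\theta \bmod 1)$, $k\in\mathbb Z$. With $\alpha=[a_1,a_2,\ldots]$ the continued fraction expansion ($a_n\in\mathbb N$), the words over $\{0,1\}$ are $s_{-1}=1$, $s_0=0$, $s_1=s_0^{a_1-1}s_{-1}$, $s_n=s_{n-1}^{a_n}s_{n-2}$ ($n\ge2$). For $n\in\mathbb N_0$, an $(n,\alpha)$-partition of a sequence $(f_k)_{k\in\mathbb Z}$ with $f_k\in\{0,1\}$ is a sequence $(I_j,z_j)_{j\in\mathbb Z}$ where $I_j=\{d_j,d_j+1,\ldots,d_{j+1}-1\}\subset\mathbb Z$ (with integers $d_j<d_{j+1}$), $z_j\in\{s_n,s_{n-1}\}$, $0\in I_0$, and $f_{d_j}f_{d_j+1}\cdots f_{d_{j+1}-1}=z_j$ for all $j\in\mathbb Z$. (Thus the $I_j$ tile $\mathbb Z$ and $f$ is the concatenation of the blocks $z_j$.) *)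

(* Defs.v *)
From Stdlib Require Import Reals Lra Lia ZArith List.
Open Scope R_scope.

(* floor and fractional part: Int_part x = up x - 1 = floor x *)
Definition floorR (x : R) : Z := Int_part x.
Definition fracR (x : R) : R := x - IZR (floorR x).

Definition irrational (x : R) : Prop :=
  ~ exists p q : Z, q <> 0%Z /\ x = IZR p / IZR q.

Definition v (alpha theta : R) (k : Z) : nat :=
  let t := fracR (IZR k * alpha + theta) in
  if Rle_dec (1 - alpha) t then (if Rlt_dec t 1 then 1%nat else 0%nat) else 0%nat.

(* Continued fraction expansion alpha = [a_1, a_2, ...] via the Gauss map:
   cf_rem 0 = alpha, cf_rem (m+1) = frac (1 / cf_rem m),
   a_n = floor (1 / cf_rem (n-1))  for n >= 1. *)
Fixpoint cf_rem (alpha : R) (m : nat) : R :=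
  match m with
  | O => alpha
  | S m' => fracR (1 / cf_rem alpha m')
  end.

Definition cf_digit (alpha : R) (n : nat) : nat :=
  Z.to_nat (floorR (1 / cf_rem alpha (pred n))).

Definition word := list nat.

Fixpoint wpow (w : word) (k : nat) : word :=
  match k with O => nil | S k' => w ++ wpow w k' end.

(* s_pair alpha n = (s_{n-1}, s_n), with s_{-1} = 1, s_0 = 0,
   s_1 = s_0^{a_1 - 1} s_{-1}, s_n = s_{n-1}^{a_n} s_{n-2} (n >= 2). *)
Fixpoint s_pair (alpha : R) (n : nat) : word * word :=
  match n with
  | O => (1%nat :: nil, 0%nat :: nil)
  | S O => (0%nat :: nil, wpow (0%nat :: nil) (cf_digit alpha 1 - 1) ++ (1%nat :: nil))
  | S m => let (p, q) := s_pair alpha m in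
           (q, wpow q (cf_digit alpha n) ++ p)
  end.

Definition s (alpha : R) (n : nat) : word := snd (s_pair alpha n).
Definition s_prev (alpha : R) (n : nat) : word := fst (s_pair alpha n).

(* (n,alpha)-partition of f : Z -> {0,1}, given by the left endpoints d_j
   (I_j = {d_j, ..., d_{j+1}-1}) and the words z_j. *)
Definition is_partition (n : nat) (alpha : R) (f : Z -> nat)
    (d : Z -> Z) (z : Z -> word) : Prop :=
  (forall j : Z, (d j < d (j + 1))%Z) /\
  (forall j : Z, z j = s alpha n \/ z j = s_prev alpha n) /\
  (d 0 <= 0 < d 1)%Z /\
  (forall j : Z,
     Z.of_nat (length (z j)) = (d (j + 1) - d j)%Z /\
     forall i : nat, (i < length (z j))%nat ->
       f (d j + Z.of_nat i)%Z = nth i (z j) 0%nat).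

Definition unique_partition (n : nat) (alpha : R) (f : Z -> nat) : Prop :=
  (exists d z, is_partition n alpha f d z) /\
  (forall d z d' z', is_partition n alpha f d z -> is_partition n alpha f d' z' ->
     (forall j, d j = d' j) /\ (forall j, z j = z' j)).

(* Main.v *)
Require Import Defs.
From Stdlib Require Import Reals Lra Lia ZArith List Classical.
Open Scope R_scope.

Lemma floor_bounds (x : R) : IZR (floorR x) <= x < IZR (floorR x) + 1.
Proof. unfold floorR. destruct (base_Int_part x). lra. Qed.

Lemma floor_unique (x : R) (k : Z) : IZR k <= x < IZR k + 1 -> floorR x = k.
Proof.
  intros [H1 H2]. destruct (floor_bounds x) as [H3 H4].
  assert (A : (floorR x < k + 1)%Z). { apply lt_IZR. rewrite plus_IZR. simpl. lra. }
  assert (B : (k < floorR x + 1)%Z). { apply lt_IZR. rewrite plus_IZR. simpl. lra. }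
  lia.
Qed.

Lemma frac_bounds (x : R) : 0 <= fracR x < 1.
Proof. unfold fracR. destruct (floor_bounds x). lra. Qed.

Lemma floor_shift (x : R) (k : Z) : floorR (x + IZR k) = (floorR x + k)%Z.
Proof. apply floor_unique. destruct (floor_bounds x). rewrite plus_IZR. lra. Qed.

Lemma frac_shift (x : R) (k : Z) : fracR (x + IZR k) = fracR x.
Proof. unfold fracR. rewrite floor_shift, plus_IZR. ring. Qed.

Lemma frac_id (y : R) (k : Z) : 0 <= y < 1 -> fracR (IZR k + y) = y.
Proof.
  intros H. unfold fracR. rewrite (floor_unique _ k). ring. lra.
Qed.

Lemma frac_eq (x y : R) (k : Z) : 0 <= y < 1 -> x = IZR k + y -> fracR x = y.
Proof. intros H ->. apply frac_id; auto. Qed.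

Lemma frac_decomp (x : R) : x = IZR (floorR x) + fracR x.
Proof. unfold fracR. ring. Qed.

Lemma floor_wrap (x d : R) : 0 < d < 1 -> 1 - d <= fracR x ->
  floorR (x + d) = (floorR x + 1)%Z.
Proof.
  intros Hd H. apply floor_unique. pose proof (frac_bounds x). unfold fracR in *.
  rewrite plus_IZR. simpl. lra.
Qed.

Lemma floor_nowrap (x d : R) : 0 < d < 1 -> fracR x < 1 - d ->
  floorR (x + d) = floorR x.
Proof.
  intros Hd H. apply floor_unique. pose proof (frac_bounds x). unfold fracR in *. lra.
Qed.

Lemma floor_nonneg (x : R) : 0 <= x -> (0 <= floorR x)%Z.
Proof.
  intros H. destruct (floor_bounds x). assert (-1 < floorR x)%Z.
  apply lt_IZR. simpl. lra. lia.
Qed.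

Lemma floor_01 (x : R) : 0 <= x < 1 -> floorR x = 0%Z.
Proof. intros. apply floor_unique. simpl. lra. Qed.

Lemma floor_12 (x : R) : 1 <= x < 2 -> floorR x = 1%Z.
Proof. intros. apply floor_unique. simpl. lra. Qed.

Lemma frac_int_shift (x : R) (k : Z) : fracR (IZR k + x) = fracR x.
Proof. rewrite Rplus_comm. apply frac_shift. Qed.

Lemma frac_diff (x y : R) (m : Z) : x = y + IZR m -> fracR x = fracR y.
Proof. intros ->. apply frac_shift. Qed.

Definition ufr (d r : R) (k : Z) := fracR (IZR k * d + r).
Definition T1 (d r : R) (b : bool) (k : Z) : Prop :=
  if b then 1 - d <= ufr d r k else ufr d r k < 1 - d.
Definition gam (b : bool) (d : R) := if b then d else 1 - d.

Definition RN (d r : R) (b : bool) (a : Z) (d' r' : R) (e : Z -> Z) : Prop :=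
 (e 0 <= 0 < e 1)%Z /\ forall j,
  (T1 d' r' (negb b) j -> e (j+1)%Z = (e j + 1)%Z /\ ~ T1 d r b (e j)) /\
  (~ T1 d' r' (negb b) j -> e (j+1)%Z = (e j + a)%Z /\
     (forall i, (0 <= i < a - 1)%Z -> ~ T1 d r b (e j + i)%Z) /\ T1 d r b (e j + (a - 1))%Z).

Lemma ufr_add d r k i : ufr d r (k + i) = fracR (ufr d r k + IZR i * d).
Proof.
  unfold ufr. symmetry. apply (frac_diff _ _ (- floorR (IZR k * d + r))%Z).
  unfold fracR. rewrite plus_IZR, opp_IZR. ring.
Qed.

Lemma a_facts (g : R) : 0 < g < 1 -> (forall z, 1 / g <> IZR z) ->
  (1 <= floorR (1/g))%Z /\ IZR (floorR (1/g)) * g < 1 /\ 1 < (IZR (floorR (1/g)) + 1) * g.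
Proof.
  intros Hg Hn. destruct (floor_bounds (1/g)) as [H1 H2].
  assert (H3 : IZR (floorR (1/g)) < 1/g).
  { destruct H1; auto. exfalso. apply (Hn (floorR (1/g))). auto. }
  assert (Hi : 1 < 1/g). { apply (Rmult_lt_reg_l g). lra. field_simplify; lra. }
  split; [|split].
  - assert (0 < floorR (1/g))%Z. { apply lt_IZR. simpl. lra. } lia.
  - apply (Rmult_lt_compat_r g) in H3; [|lra]. field_simplify in H3; lra.
  - apply (Rmult_lt_compat_r g) in H2; [|lra]. field_simplify in H2; lra.
Qed.

Lemma lt_div_iff L w y : 0 < L -> (w < y / L <-> L * w < y).
Proof.
  intros HL. assert (E: L * (y / L) = y) by (field; lra).
  split; intro H.
  - assert (L * w < L * (y/L)) by (apply Rmult_lt_compat_l; lra). lra.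
  - destruct (Rlt_le_dec w (y/L)) as [|H']; auto.
    assert (L * (y/L) <= L * w) by (apply Rmult_le_compat_l; lra). lra.
Qed.

Lemma gt_div_iff L w y : 0 < L -> (y / L < w <-> y < L * w).
Proof.
  intros HL. assert (E: L * (y / L) = y) by (field; lra).
  split; intro H.
  - assert (L * (y/L) < L * w) by (apply Rmult_lt_compat_l; lra). lra.
  - destruct (Rlt_le_dec (y/L) w) as [|H']; auto.
    assert (L * w <= L * (y/L)) by (apply Rmult_le_compat_l; lra). lra.
Qed.

Lemma frac01 (d : R) : 0 < d < 1 -> forall x, 0 <= fracR x < 1.
Proof. intros; apply frac_bounds. Qed.

Lemma div01 x y : 0 < x < y -> 0 < x / y < 1.
Proof.
  intros H. split. apply Rdiv_lt_0_compat; lra.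
  apply (gt_div_iff y 1 x); lra.
Qed.

Lemma div01' x y : 0 <= x < y -> 0 <= x / y < 1.
Proof.
  intros H. split.
  - unfold Rdiv. apply Rmult_le_pos. lra. left; apply Rinv_0_lt_compat; lra.
  - apply (gt_div_iff y 1 x); lra.
Qed.

Lemma renorm_true g r : 0 < g < 1 -> (forall z, 1/g <> IZR z) ->
  exists d' r' e, 0 < d' < 1 /\
    gam false d' = (1 - IZR (floorR (1/g)) * g) / (1 - (IZR (floorR (1/g)) - 1) * g) /\
    RN g r true (floorR (1/g)) d' r' e.
Proof.
  intros Hg Hn. destruct (a_facts g Hg Hn) as [Ha1 [Ha2 Ha3]].
  set (a := floorR (1/g)) in *.
  assert (HaR : 1 <= IZR a) by (apply IZR_le; lia).
  set (L := 1 - (IZR a - 1) * g).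
  assert (HL : g < L <= 1) by (unfold L; nra).
  assert (He0 : exists e0, 0 <= ufr g r e0 < L /\ (e0 <= 0)%Z /\
     (ufr g r e0 < L - g -> (0 < e0 + 1)%Z) /\ (L - g <= ufr g r e0 -> (0 < e0 + a)%Z)).
  { destruct (Rlt_dec (ufr g r 0) L) as [Hl|Hl].
    - exists 0%Z. pose proof (frac_bounds (IZR 0 * g + r)). unfold ufr. 
      split; [unfold ufr in Hl; lra|]. split; [lia|]. split; intros; lia.
    - apply Rnot_lt_le in Hl. set (u := ufr g r 0) in *.
      assert (Hu : 0 <= u < 1) by apply frac_bounds.
      set (q := (u - (1 - IZR a * g)) / g).
      assert (Hq : q * g = u - (1 - IZR a * g)) by (unfold q; field; lra).
      set (i := floorR q).
      destruct (floor_bounds q) as [Hi1 Hi2]. fold i in Hi1, Hi2.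
      assert (Hig1 : IZR i * g <= q * g) by (apply Rmult_le_compat_r; lra).
      assert (Hig2 : q * g < (IZR i + 1) * g) by (apply Rmult_lt_compat_r; lra).
      assert (Hq1 : 1 <= q). { apply Rmult_le_reg_r with g. lra. unfold L in Hl. nra. }
      assert (Hq2 : q < IZR a). { apply Rmult_lt_reg_r with g. lra. nra. }
      assert (Hi0 : (0 < i)%Z) by (apply lt_IZR; simpl; lra).
      assert (Hia : (i < a)%Z) by (apply lt_IZR; lra).
      assert (Hv : ufr g r (- i) = u - IZR i * g).
      { replace (-i)%Z with (0 + - i)%Z by lia. rewrite ufr_add. fold u.
        apply (frac_eq _ _ 0%Z). split. lra. unfold L in HL. lra. rewrite opp_IZR. simpl. ring. }
      exists (- i)%Z. rewrite Hv. split; [unfold L; split; lra|]. split; [lia|]. split.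
      + intros. exfalso. unfold L in *. nra.
      + intros. lia. }
  destruct He0 as [e0 [Hu0 [He0n [HB0 HA0]]]].
  set (u0 := ufr g r e0) in *.
  set (d' := g / L). set (r' := u0 / L).
  assert (Hd' : 0 < d' < 1) by (apply div01; lra).
  assert (Hr' : 0 <= r' < 1) by (apply div01'; lra).
  assert (E1 : 1 - d' = (L - g) / L) by (unfold d'; field; lra).
  set (e := fun j => (e0 + j + (a - 1) * floorR (IZR j * d' + r'))%Z).
  assert (U : forall j, ufr g r (e j) = L * fracR (IZR j * d' + r')).
  { intros j. unfold ufr at 1.
    pose proof (frac_bounds (IZR j * d' + r')) as Hw.
    apply (frac_eq _ _ (floorR (IZR e0 * g + r) + floorR (IZR j * d' + r'))%Z).
    split; nra.
    unfold e. rewrite !plus_IZR, mult_IZR, minus_IZR.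
    unfold u0, ufr in r'. unfold r', d'. unfold fracR. simpl. unfold L. field. unfold L in HL. lra. }
  exists d', r', e. split; auto. split.
  { unfold gam. rewrite E1. unfold L. f_equal. ring. }
  split.
  - unfold e. simpl (IZR 0). rewrite Rmult_0_l, Rplus_0_l, (floor_01 r' Hr').
    assert (H01 : (0 <= floorR (IZR 1 * d' + r'))%Z) by (apply floor_nonneg; simpl; lra).
    split; [lia|].
    destruct (Rlt_le_dec u0 (L - g)) as [Hl|Hl].
    + specialize (HB0 Hl). nia.
    + rewrite (floor_12 (IZR 1 * d' + r')). specialize (HA0 Hl). lia.
      simpl. split; [|lra]. assert ((L-g)/L <= r'). { unfold r'. unfold Rdiv. apply Rmult_le_compat_r. left; apply Rinv_0_lt_compat; lra. lra. } lra.
  - intros j. set (x := IZR j * d' + r').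
    assert (Hx : IZR (j + 1) * d' + r' = x + d') by (unfold x; rewrite plus_IZR; ring).
    pose proof (frac_bounds x) as Hw.
    assert (HLw : L * fracR x < L) by nra.
    assert (Hga : g <= IZR a * g) by nra.
    unfold T1, negb. assert (Ew : ufr d' r' j = fracR x) by reflexivity. rewrite Ew, E1. split.
    + intros HB. apply lt_div_iff in HB; [|lra].
      split.
      * unfold e. fold x. rewrite Hx, floor_nowrap; [lia|auto|]. rewrite E1. apply lt_div_iff; lra.
      * rewrite U. fold x. unfold L in *. nra.
    + intros HA. assert (HA' : L - g <= L * fracR x).
      { destruct (Rlt_le_dec (L * fracR x) (L - g)); auto. exfalso. apply HA. apply lt_div_iff; lra. }
      split; [|split].
      * unfold e. fold x. rewrite Hx, floor_wrap; [lia|auto|]. rewrite E1.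
        destruct (Rlt_le_dec (fracR x) ((L-g)/L)) as [h|h]; auto. exfalso. apply HA. auto.
      * intros i Hi. rewrite ufr_add, U. fold x.
        assert (Hi' : 0 <= IZR i <= IZR a - 2).
        { split. apply IZR_le; lia. replace (IZR a - 2) with (IZR (a - 2)) by (rewrite minus_IZR; reflexivity). apply IZR_le; lia. }
        rewrite (frac_eq _ (L * fracR x + IZR i * g) 0%Z).
        -- unfold L in *. nra.
        -- split; unfold L in *; nra.
        -- simpl; ring.
      * rewrite ufr_add, U. fold x. rewrite minus_IZR. simpl (IZR 1).
        rewrite (frac_eq _ (L * fracR x + (IZR a - 1) * g) 0%Z).
        -- unfold L in *. nra.
        -- split; unfold L in *; nra.
        -- simpl; ring.
Qed.

Lemma ufr_sub d r k i : ufr d r (k + i) = fracR (ufr d r k - IZR i * (1 - d)).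
Proof.
  rewrite ufr_add. apply (frac_diff _ _ i). ring.
Qed.

Lemma renorm_false d r : 0 < d < 1 -> (forall z, 1/(1-d) <> IZR z) ->
  exists d' r' e, 0 < d' < 1 /\
    gam true d' = (1 - IZR (floorR (1/(1-d))) * (1-d)) / (1 - (IZR (floorR (1/(1-d))) - 1) * (1-d)) /\
    RN d r false (floorR (1/(1-d))) d' r' e.
Proof.
  intros Hd Hn. set (g := 1 - d) in *. assert (Hg : 0 < g < 1) by (unfold g; lra).
  destruct (a_facts g Hg Hn) as [Ha1 [Ha2 Ha3]].
  set (a := floorR (1/g)) in *.
  assert (HaR : 1 <= IZR a) by (apply IZR_le; lia).
  set (L := 1 - (IZR a - 1) * g).
  assert (HL : g < L <= 1) by (unfold L; nra).
  assert (He0 : exists e0, 1 - L <= ufr d r e0 < 1 /\ (e0 <= 0)%Z /\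
     (ufr d r e0 < 1 - L + g -> (0 < e0 + a)%Z) /\ (1 - L + g <= ufr d r e0 -> (0 < e0 + 1)%Z)).
  { destruct (Rlt_dec (ufr d r 0) (1 - L)) as [Hl|Hl].
    - set (u := ufr d r 0) in *.
      assert (Hu : 0 <= u < 1) by apply frac_bounds.
      set (q := u / g).
      assert (Hq : q * g = u) by (unfold q; field; lra).
      set (mm := floorR q).
      destruct (floor_bounds q) as [Hi1 Hi2]. fold mm in Hi1, Hi2.
      assert (Hig1 : IZR mm * g <= q * g) by (apply Rmult_le_compat_r; lra).
      assert (Hig2 : q * g < (IZR mm + 1) * g) by (apply Rmult_lt_compat_r; lra).
      assert (Hq0 : 0 <= q) by (unfold q; apply Rmult_le_pos; [lra|left; apply Rinv_0_lt_compat; lra]).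
      assert (Hq2 : q < IZR a - 1). { apply Rmult_lt_reg_r with g. lra. unfold L in Hl. lra. }
      assert (Hm0 : (0 <= mm)%Z) by (apply floor_nonneg; lra).
      assert (Hma : (mm < a - 1)%Z) by (apply lt_IZR; rewrite minus_IZR; simpl; lra).
      set (i := (a - 1 - mm)%Z).
      assert (HiR : IZR i = IZR a - 1 - IZR mm) by (unfold i; rewrite !minus_IZR; reflexivity).
      assert (Hv : ufr d r (- i) = u + IZR i * g).
      { replace (-i)%Z with (0 + - i)%Z by lia. rewrite ufr_sub. fold u. fold g.
        apply (frac_eq _ _ 0%Z). rewrite HiR. split; nra. rewrite opp_IZR. simpl. ring. }
      exists (- i)%Z. rewrite Hv. split; [unfold L; rewrite HiR; split; nra|]. split; [lia|]. split.
      + intros. lia.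
      + intros. exfalso. unfold L in *. rewrite HiR in *. nra.
    - apply Rnot_lt_le in Hl. exists 0%Z. pose proof (frac_bounds (IZR 0 * d + r)). unfold ufr in *.
      split; [lra|]. split; [lia|]. split; intros; lia. }
  destruct He0 as [e0 [Hu0 [He0n [HA0 HB0]]]].
  set (u0 := ufr d r e0) in *.
  set (d' := 1 - g / L). set (r' := (u0 - (1 - L)) / L).
  assert (HgL : 0 < g / L < 1) by (apply div01; lra).
  assert (Hd' : 0 < d' < 1) by (unfold d'; lra).
  assert (Hr' : 0 <= r' < 1) by (apply div01'; lra).
  assert (E1 : 1 - d' = g / L) by (unfold d'; ring).
  set (e := fun j => (e0 + a * j - (a - 1) * floorR (IZR j * d' + r'))%Z).
  assert (U : forall j, ufr d r (e j) = (1 - L) + L * fracR (IZR j * d' + r')).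
  { intros j. unfold ufr at 1.
    pose proof (frac_bounds (IZR j * d' + r')) as Hw.
    apply (frac_eq _ _ (e j + floorR (IZR e0 * d + r) - e0 + floorR (IZR j * d' + r') - j)%Z).
    split; unfold L in *; nra.
    unfold e. repeat rewrite ?plus_IZR, ?minus_IZR, ?mult_IZR.
    unfold u0, ufr in r'. unfold r', d'. unfold fracR. simpl. unfold L, g. field. unfold L, g in HL. lra. }
  exists d', r', e. split; auto. split.
  { unfold gam. unfold d', L. field. lra. }
  split.
  - unfold e. simpl (IZR 0). rewrite Rmult_0_l, Rplus_0_l, (floor_01 r' Hr').
    assert (H01 : (0 <= floorR (IZR 1 * d' + r'))%Z) by (apply floor_nonneg; simpl; lra).
    assert (H02 : (floorR (IZR 1 * d' + r') <= 1)%Z).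
    { destruct (floor_bounds (IZR 1 * d' + r')). assert (floorR (IZR 1 * d' + r') < 2)%Z.
      apply lt_IZR. simpl in *. lra. lia. }
    split; [lia|].
    destruct (Rlt_le_dec u0 (1 - L + g)) as [Hl|Hl].
    + rewrite (floor_01 (IZR 1 * d' + r')). specialize (HA0 Hl). lia.
      simpl. split; [lra|]. assert (r' < g / L). { unfold r'. apply lt_div_iff. lra.
      rewrite Rmult_comm. unfold Rdiv. rewrite Rmult_assoc, Rinv_l, Rmult_1_r; lra. } lra.
    + specialize (HB0 Hl). nia.
  - intros j. set (x := IZR j * d' + r').
    assert (Hx : IZR (j + 1) * d' + r' = x + d') by (unfold x; rewrite plus_IZR; ring).
    pose proof (frac_bounds x) as Hw.
    assert (HLw : L * fracR x < L) by nra.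
    assert (Hga : g <= IZR a * g) by nra.
    unfold T1, negb. assert (Ew : ufr d' r' j = fracR x) by reflexivity. rewrite Ew, E1.
    fold g. split.
    + intros HB. assert (HB' : g <= L * fracR x).
      { destruct (Rlt_le_dec (L * fracR x) g); auto. exfalso.
        apply (lt_div_iff L (fracR x) g) in r0; lra. }
      split.
      * unfold e. fold x. rewrite Hx, floor_wrap; [lia|auto|]. rewrite E1; auto.
      * rewrite U. fold x. unfold L in *. nra.
    + intros HA. apply Rnot_le_lt in HA. apply lt_div_iff in HA; [|lra].
      split; [|split].
      * unfold e. fold x. rewrite Hx, floor_nowrap; [lia|auto|]. rewrite E1. apply lt_div_iff; lra.
      * intros i Hi. rewrite ufr_sub, U. fold x. fold g.
        assert (Hi' : 0 <= IZR i <= IZR a - 2).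
        { split. apply IZR_le; lia. replace (IZR a - 2) with (IZR (a - 2)) by (rewrite minus_IZR; reflexivity). apply IZR_le; lia. }
        rewrite (frac_eq _ (1 - L + L * fracR x - IZR i * g) 0%Z).
        -- unfold L in *. nra.
        -- split; unfold L in *; nra.
        -- simpl; ring.
      * rewrite ufr_sub, U. fold x. fold g. rewrite minus_IZR. simpl (IZR 1).
        rewrite (frac_eq _ (1 - L + L * fracR x - (IZR a - 1) * g) 0%Z).
        -- unfold L in *. nra.
        -- split; unfold L in *; nra.
        -- simpl; ring.
Qed.

Lemma renorm d r b : 0 < d < 1 -> (forall z, 1/gam b d <> IZR z) ->
  exists d' r' e, 0 < d' < 1 /\
    gam (negb b) d' = (1 - IZR (floorR (1/gam b d)) * gam b d) / (1 - (IZR (floorR (1/gam b d)) - 1) * gam b d) /\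
    RN d r b (floorR (1/gam b d)) d' r' e.
Proof.
  destruct b; simpl; intros; [apply renorm_true | apply renorm_false]; auto.
Qed.

Lemma irr_notint x z : irrational x -> x <> IZR z.
Proof.
  intros H E. apply H. exists z, 1%Z. split; [lia|]. rewrite E. simpl. field.
Qed.

Lemma irr_inv x : irrational x -> irrational (1 / x).
Proof.
  intros H [p [q [Hq E]]]. apply H.
  assert (Hx : x <> 0) by (apply (irr_notint x 0 H)).
  assert (Hp : p <> 0%Z).
  { intro. subst. simpl in E. assert (1 / x <> 0). { unfold Rdiv. rewrite Rmult_1_l. apply Rinv_neq_0_compat; auto. }
    apply H0. rewrite E. unfold Rdiv. ring. }
  exists q, p. split; auto.
  apply not_0_IZR in Hp. apply not_0_IZR in Hq.
  assert (x = 1 / (1 / x)) by (field; auto). rewrite H0, E. field. auto.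
Qed.

Lemma irr_add_int x k : irrational x -> irrational (x + IZR k).
Proof.
  intros H [p [q [Hq E]]]. apply H. exists (p - k * q)%Z, q. split; auto.
  apply not_0_IZR in Hq. rewrite minus_IZR, mult_IZR.
  assert (x = IZR p / IZR q - IZR k) by lra. rewrite H0. field. auto.
Qed.

Lemma cf_facts alpha : 0 < alpha < 1 -> irrational alpha ->
  forall n, 0 < cf_rem alpha n < 1 /\ irrational (cf_rem alpha n).
Proof.
  intros Ha Hi. induction n as [|n [IH1 IH2]]; simpl; auto.
  assert (Hir : irrational (fracR (1 / cf_rem alpha n))).
  { unfold fracR. replace (1 / cf_rem alpha n - IZR (floorR (1 / cf_rem alpha n)))
      with (1 / cf_rem alpha n + IZR (- floorR (1 / cf_rem alpha n))) by (rewrite opp_IZR; ring).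
    apply irr_add_int. apply irr_inv. auto. }
  split; auto. pose proof (frac_bounds (1 / cf_rem alpha n)).
  split; [|lra]. destruct H as [[H|H] _]; auto. exfalso. apply (irr_notint _ 0 Hir). auto.
Qed.

Definition g (alpha : R) (n : nat) : R :=
  match n with O => alpha | S _ => cf_rem alpha n / (1 + cf_rem alpha n) end.

Definition cnt (alpha : R) (n : nat) : nat :=
  match n with O => (cf_digit alpha 1 - 1)%nat | S m => cf_digit alpha (S (S m)) end.

Lemma inv_g_S alpha m : 0 < cf_rem alpha (S m) ->
  1 / g alpha (S m) = 1 / cf_rem alpha (S m) + IZR 1.
Proof. intros H. unfold g. simpl (IZR 1). field. lra. Qed.

Lemma g_facts alpha : 0 < alpha < 1 -> irrational alpha -> forall n,
  0 < g alpha n < 1 /\ (forall z, 1 / g alpha n <> IZR z) /\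
  (1 - IZR (floorR (1 / g alpha n)) * g alpha n) / (1 - (IZR (floorR (1 / g alpha n)) - 1) * g alpha n)
    = g alpha (S n) /\
  cnt alpha n = (Z.to_nat (floorR (1 / g alpha n)) - 1)%nat.
Proof.
  intros Ha Hi n. pose proof (cf_facts alpha Ha Hi) as CF.
  destruct n as [|m].
  - simpl g. split; auto. split.
    { intros z. apply irr_notint. apply irr_inv; auto. }
    split; [|reflexivity].
    unfold g. simpl cf_rem. destruct (CF 1%nat) as [[H1 H2] _]. simpl in H1, H2.
    unfold fracR in *. set (F := IZR (floorR (1 / alpha))) in *.
    assert (0 < 1 - (F - 1) * alpha). { assert (1/alpha * alpha = 1) by (field; lra).
      assert (0 < (1/alpha - F) * alpha) by (apply Rmult_lt_0_compat; lra). nra. }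
    field. split; lra.
  - destruct (CF (S m)) as [[H1 H2] H3].
    rewrite inv_g_S by auto. rewrite floor_shift.
    split. { unfold g. split. apply Rdiv_lt_0_compat; lra.
      apply Rmult_lt_reg_r with (1 + cf_rem alpha (S m)); [lra|]. unfold Rdiv. rewrite Rmult_assoc, Rinv_l; lra. }
    split. { intros z. apply irr_notint. apply irr_add_int. apply irr_inv; auto. }
    split.
    + unfold g. rewrite plus_IZR. simpl (IZR 1). change (cf_rem alpha (S (S m))) with (fracR (1 / cf_rem alpha (S m))).
      destruct (CF (S (S m))) as [[H4 H5] _]. change (cf_rem alpha (S (S m))) with (fracR (1 / cf_rem alpha (S m))) in H4, H5. unfold fracR in *.
      set (x := cf_rem alpha (S m)) in *. set (F := IZR (floorR (1 / x))) in *.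
      assert (1/x * x = 1) by (field; lra).
      assert (0 < (1/x - F) * x) by (apply Rmult_lt_0_compat; lra).
      field. repeat split; nra.
    + simpl cnt. unfold cf_digit. simpl pred.
      assert (0 <= floorR (1 / cf_rem alpha (S m)))%Z.
      { apply floor_nonneg. unfold Rdiv. rewrite Rmult_1_l. left. apply Rinv_0_lt_compat. lra. }
      lia.
Qed.

Lemma s_S alpha n : s_prev alpha (S n) = s alpha n /\
  s alpha (S n) = wpow (s alpha n) (cnt alpha n) ++ s_prev alpha n.
Proof.
  destruct n as [|m].
  - split; reflexivity.
  - unfold s, s_prev. change (s_pair alpha (S (S m))) with
      (let (p, q) := s_pair alpha (S m) in (q, wpow q (cf_digit alpha (S (S m))) ++ p)).
    destruct (s_pair alpha (S m)) as [p q]. simpl. split; reflexivity.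
Qed.

Lemma last_app_ne (l p : word) (d : nat) : p <> nil -> last (l ++ p) d = last p d.
Proof.
  intros Hp. induction l as [|x l IH]; simpl; auto.
  destruct (l ++ p) eqn:E.
  - apply app_eq_nil in E; destruct E; congruence.
  - exact IH.
Qed.

Lemma words_ok alpha n : s alpha n <> nil /\ s_prev alpha n <> nil /\
  last (s alpha n) 0%nat <> last (s_prev alpha n) 0%nat.
Proof.
  induction n as [|n [H1 [H2 H3]]].
  - unfold s, s_prev; simpl. repeat split; discriminate.
  - destruct (s_S alpha n) as [E1 E2]. rewrite E1, E2. repeat split; auto.
    + intro E. apply app_eq_nil in E. destruct E; auto.
    + rewrite last_app_ne; auto.
Qed.

Lemma words_neq alpha n : s alpha n <> s_prev alpha n.
Proof. destruct (words_ok alpha n) as [_ [_ H]]. intro E. apply H. rewrite E. auto. Qed.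

Lemma len_pos (w : word) : w <> nil -> (1 <= length w)%nat.
Proof. destruct w; simpl; [congruence|lia]. Qed.

Definition Blk (f : Z -> nat) (x : Z) (w : word) : Prop :=
  forall i : nat, (i < length w)%nat -> f (x + Z.of_nat i)%Z = nth i w 0%nat.
Definition Bl (f : Z -> nat) (d : Z -> Z) (j : Z) (w : word) : Prop :=
  Z.of_nat (length w) = (d (j + 1) - d j)%Z /\ Blk f (d j) w.

Lemma Blk_app f x w1 w2 : Blk f x w1 -> Blk f (x + Z.of_nat (length w1)) w2 -> Blk f x (w1 ++ w2).
Proof.
  intros H1 H2 i Hi. rewrite length_app in Hi.
  destruct (Nat.lt_ge_cases i (length w1)) as [h|h].
  - rewrite app_nth1; auto.
  - rewrite app_nth2; auto. rewrite <- H2 by lia. f_equal. lia.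
Qed.

Lemma Bl_wpow f d w : forall m k, (forall i : nat, (i < m)%nat -> Bl f d (k + Z.of_nat i) w) ->
  Z.of_nat (length (wpow w m)) = (d (k + Z.of_nat m) - d k)%Z /\ Blk f (d k) (wpow w m).
Proof.
  induction m as [|m IH]; intros k H.
  - simpl. split. rewrite Z.add_0_r. lia. intros i Hi; simpl in Hi; lia.
  - destruct (H 0%nat ltac:(lia)) as [L0 B0]. rewrite Z.add_0_r in L0, B0.
    destruct (IH (k + 1)%Z) as [L1 B1].
    { intros i Hi. replace (k + 1 + Z.of_nat i)%Z with (k + Z.of_nat (S i))%Z by lia. apply H. lia. }
    simpl wpow. split.
    + rewrite length_app. replace (k + 1 + Z.of_nat m)%Z with (k + Z.of_nat (S m))%Z in L1 by lia. lia.
    + apply Blk_app; auto. replace (d k + Z.of_nat (length w))%Z with (d (k+1))%Z by lia. auto.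
Qed.

Lemma T1_dec d r b j : {T1 d r b j} + {~ T1 d r b j}.
Proof.
  unfold T1. destruct b.
  - destruct (Rle_dec (1 - d) (ufr d r j)); auto.
  - destruct (Rlt_dec (ufr d r j) (1 - d)); auto.
Qed.

Definition Lev (alpha : R) (f : Z -> nat) (n : nat) : Prop :=
  exists (d : Z -> Z) dl r b, 0 < dl < 1 /\ gam b dl = g alpha n /\ (d 0 <= 0 < d 1)%Z /\
    forall j, (T1 dl r b j -> Bl f d j (s_prev alpha n)) /\ (~ T1 dl r b j -> Bl f d j (s alpha n)).

Lemma mono (d : Z -> Z) : (forall j, d j < d (j + 1))%Z -> forall j k, (j <= k)%Z -> (d j <= d k)%Z.
Proof.
  intros H j k Hjk. replace k with (j + Z.of_nat (Z.to_nat (k - j)))%Z by lia.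
  induction (Z.to_nat (k - j)) as [|m IH]. rewrite Z.add_0_r; lia.
  specialize (H (j + Z.of_nat m)%Z). replace (j + Z.of_nat (S m))%Z with (j + Z.of_nat m + 1)%Z by lia. lia.
Qed.

Lemma Lev_incr alpha f n d dl r b : 
  (forall j, (T1 dl r b j -> Bl f d j (s_prev alpha n)) /\ (~ T1 dl r b j -> Bl f d j (s alpha n))) ->
  forall j, (d j < d (j + 1))%Z.
Proof.
  intros H j. destruct (words_ok alpha n) as [N1 [N2 _]].
  destruct (T1_dec dl r b j) as [h|h]; apply H in h; destruct h as [h _].
  - pose proof (len_pos _ N2). lia.
  - pose proof (len_pos _ N1). lia.
Qed.

Lemma Lev_0 alpha theta : 0 < alpha < 1 -> Lev alpha (v alpha theta) 0.
Proof.
  intros Ha. exists (fun j => j), alpha, theta, true. split; auto. split; auto. split; [lia|].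
  intros j. unfold s, s_prev; simpl. unfold T1, ufr.
  pose proof (frac_bounds (IZR j * alpha + theta)) as Hf.
  split; intros H; (split; [simpl; lia|]); intros i Hi; simpl in Hi; assert (i = 0%nat) by lia; subst;
    simpl; rewrite Z.add_0_r; unfold v.
  - destruct (Rle_dec (1 - alpha) (fracR (IZR j * alpha + theta))); [|contradiction].
    destruct (Rlt_dec (fracR (IZR j * alpha + theta)) 1); [reflexivity|lra].
  - destruct (Rle_dec (1 - alpha) (fracR (IZR j * alpha + theta))); [contradiction|reflexivity].
Qed.

Lemma Lev_S alpha f n : 0 < alpha < 1 -> irrational alpha -> Lev alpha f n -> Lev alpha f (S n).
Proof.
  intros Ha Hi [d [dl [r [b [Hdl [Hg [H0 HB]]]]]]].
  destruct (g_facts alpha Ha Hi n) as [G1 [G2 [G3 G4]]].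
  rewrite <- Hg in G2, G3, G4.
  destruct (renorm dl r b Hdl G2) as [dl' [r' [e [Hdl' [Hg' [He0 He]]]]]].
  set (a := floorR (1 / gam b dl)) in *.
  assert (Ha1 : (1 <= a)%Z).
  { assert (0 < gam b dl < 1) by (rewrite Hg; apply G1). destruct (a_facts _ H G2). auto. }
  pose proof (Lev_incr _ _ _ _ _ _ _ HB) as Hinc.
  pose proof (mono d Hinc) as Hm.
  destruct (s_S alpha n) as [E1 E2].
  exists (fun j => d (e j)), dl', r', (negb b). split; auto. split; [rewrite Hg', G3; auto|].
  split.
  { split. pose proof (Hm (e 0%Z) 0%Z ltac:(lia)). lia. pose proof (Hm 1%Z (e 1%Z) ltac:(lia)). lia. }
  intros j. destruct (He j) as [HBj HAj]. rewrite E1, E2. split.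
  - intros h. destruct (HBj h) as [Ej Nj]. destruct (proj2 (HB (e j)) Nj) as [L1 B1].
    split; auto. rewrite Ej. auto.
  - intros h. destruct (HAj h) as [Ej [Ni Tl]].
    destruct (Bl_wpow f d (s alpha n) (cnt alpha n) (e j)) as [L1 B1].
    { intros i Hi'. apply (proj2 (HB _)). apply Ni. lia. }
    replace (e j + Z.of_nat (cnt alpha n))%Z with (e j + (a - 1))%Z in L1 by lia.
    destruct (proj1 (HB _) Tl) as [L2 B2].
    split.
    + rewrite length_app, Nat2Z.inj_add, L1, L2, Ej. replace (e j + (a - 1) + 1)%Z with (e j + a)%Z by lia. lia.
    + apply Blk_app; auto. rewrite L1. replace (d (e j) + (d (e j + (a - 1)) - d (e j)))%Z with (d (e j + (a-1)))%Z by lia. auto.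
Qed.

Lemma Lev_all alpha theta : 0 < alpha < 1 -> irrational alpha -> forall n, Lev alpha (v alpha theta) n.
Proof.
  intros Ha Hi n. induction n. apply Lev_0; auto. apply Lev_S; auto.
Qed.

Lemma exist_part alpha theta n : 0 < alpha < 1 -> irrational alpha ->
  exists d z, is_partition n alpha (v alpha theta) d z.
Proof.
  intros Ha Hi. destruct (Lev_all alpha theta Ha Hi n) as [d [dl [r [b [Hdl [Hg [H0 HB]]]]]]].
  exists d, (fun j => if T1_dec dl r b j then s_prev alpha n else s alpha n).
  pose proof (Lev_incr _ _ _ _ _ _ _ HB) as Hinc.
  split; auto. split.
  { intros j. destruct (T1_dec dl r b j); auto. }
  split; auto.
  intros j. destruct (T1_dec dl r b j) as [h|h]; apply HB in h; destruct h as [L B]; split; auto.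
Qed.

Definition len (w : word) : Z := Z.of_nat (length w).

Definition TyW (f : Z -> nat) (S : Z -> Prop) (x : Z) (w : word) : Prop :=
  S x /\ Blk f x w /\ S (x + len w)%Z /\ forall z, (x < z < x + len w)%Z -> ~ S z.

Definition SP (f : Z -> nat) (W1 W2 : word) (S : Z -> Prop) : Prop :=
  (exists x, S x) /\
  (forall x, S x -> exists w, (w = W1 \/ w = W2) /\ TyW f S x w) /\
  (forall y, S y -> exists x, S x /\ (x < y)%Z /\ forall z, (x < z < y)%Z -> ~ S z).

Lemma blk_eq f x w w' : Blk f x w -> Blk f x w' -> length w = length w' -> w = w'.
Proof.
  intros H1 H2 HL. apply (nth_ext _ _ 0%nat 0%nat HL).
  intros n Hn. rewrite <- H1, <- H2 by lia. auto.
Qed.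

Lemma len_pos' (w : word) : w <> nil -> (1 <= len w)%Z.
Proof. intros H. unfold len. pose proof (len_pos w H). lia. Qed.

Lemma TyW_eq f S x w w' : w <> nil -> w' <> nil -> TyW f S x w -> TyW f S x w' -> w = w'.
Proof.
  intros N N' [_ [B1 [E1 I1]]] [_ [B2 [E2 I2]]].
  pose proof (len_pos' w N). pose proof (len_pos' w' N').
  apply (blk_eq f x); auto.
  destruct (Z.lt_trichotomy (len w) (len w')) as [h|[h|h]].
  - exfalso. apply (I2 (x + len w)%Z); auto. lia.
  - unfold len in h. lia.
  - exfalso. apply (I1 (x + len w')%Z); auto. lia.
Qed.

Lemma disj f S g g' w : TyW f S g w -> S g' -> (g < g')%Z -> (g + len w <= g')%Z.
Proof.
  intros [_ [_ [_ I]]] Hg' Hlt. destruct (Z_lt_le_dec g' (g + len w)); auto.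
  exfalso. apply (I g'); auto; lia.
Qed.

Lemma TyW_ext f S S' x w : (forall y, S y <-> S' y) -> TyW f S x w -> TyW f S' x w.
Proof.
  intros E [A [B [C D]]]. split; [apply E; auto|]. split; auto. split; [apply E; auto|].
  intros z Hz HS. apply (D z Hz). apply E; auto.
Qed.

Lemma len_app w1 w2 : len (w1 ++ w2) = (len w1 + len w2)%Z.
Proof. unfold len. rewrite length_app. lia. Qed.

Lemma len_wpow w m : len (wpow w m) = (Z.of_nat m * len w)%Z.
Proof. induction m; simpl wpow. reflexivity. rewrite len_app, IHm. lia. Qed.

Lemma Blk_app_inv f x w1 w2 : Blk f x (w1 ++ w2) -> Blk f x w1 /\ Blk f (x + len w1) w2.
Proof.
  intros H. split.
  - intros i Hi. rewrite <- (app_nth1 w1 w2 0%nat Hi). apply H. rewrite length_app. lia.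
  - intros i Hi. unfold len. replace (x + Z.of_nat (length w1) + Z.of_nat i)%Z with (x + Z.of_nat (length w1 + i))%Z by lia.
    rewrite H. rewrite app_nth2 by lia. f_equal. lia. rewrite length_app. lia.
Qed.

Lemma Blk_wpow_inv f w m : forall x, Blk f x (wpow w m) -> forall i : nat, (i < m)%nat ->
  Blk f (x + Z.of_nat i * len w) w.
Proof.
  induction m as [|m IH]; intros x H i Hi. lia.
  simpl in H. apply Blk_app_inv in H. destruct H as [H1 H2].
  destruct i. simpl. rewrite Z.add_0_r. auto.
  replace (x + Z.of_nat (S i) * len w)%Z with (x + len w + Z.of_nat i * len w)%Z by lia.
  apply IH; auto. lia.
Qed.

Lemma no_mult_between (a b c : Z) : (1 <= c)%Z -> (a * c < b * c < (a + 1) * c)%Z -> False.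
Proof. intros. destruct (Z_le_gt_dec b a). nia. assert (a + 1 <= b)%Z by lia. nia. Qed.

Section Step.
Variable f : Z -> nat.
Variables W1 W2 : word.
Variable m : nat.
Hypothesis N1 : W1 <> nil.
Hypothesis N2 : W2 <> nil.
Hypothesis D12 : W1 <> W2.
Let V1 := wpow W1 m ++ W2.
Let V2 := W1.
Let l1 := len W1.
Let l2 := len W2.

Lemma lenV1 : len V1 = (Z.of_nat m * l1 + l2)%Z.
Proof. unfold V1. rewrite len_app, len_wpow. reflexivity. Qed.

Lemma NV1 : V1 <> nil.
Proof. unfold V1. intro E. apply app_eq_nil in E. destruct E; auto. Qed.

Variable Sx : Z -> Prop.
Hypothesis HS : SP f V1 V2 Sx.

Definition refine (y : Z) : Prop := exists g (i : nat), Sx g /\ y = (g + Z.of_nat i * l1)%Z /\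
  (i = 0%nat \/ ((i <= m)%nat /\ TyW f Sx g V1)).

Lemma S_refine y : Sx y -> refine y.
Proof. intros H. exists y, 0%nat. split; auto. split; [lia|auto]. Qed.

Lemma Loc g w z : TyW f Sx g w -> refine z -> (g < z < g + len w)%Z ->
  exists i : nat, (1 <= i <= m)%nat /\ TyW f Sx g V1 /\ z = (g + Z.of_nat i * l1)%Z.
Proof.
  intros Hw [g' [i' [Sg' [Ez Hi']]]] Hz.
  pose proof (len_pos' W1 N1) as P1. pose proof (len_pos' W2 N2) as P2. fold l1 l2 in P1, P2.
  destruct (Z.lt_trichotomy g' g) as [h|[h|h]].
  - exfalso. destruct Hi' as [h0|[hm hv]].
    + subst. lia.
    + pose proof (disj _ _ _ _ _ hv (proj1 Hw) h). rewrite lenV1 in H. nia.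
  - subst g'. destruct Hi' as [h0|[hm hv]].
    + subst. lia.
    + exists i'. split; [|split; auto]. split; [|auto]. destruct i'; [lia|lia].
  - exfalso. pose proof (disj _ _ _ _ _ Hw Sg' h). nia.
Qed.

Lemma R3a g : TyW f Sx g V1 -> (forall i : nat, (i < m)%nat -> TyW f refine (g + Z.of_nat i * l1) W1) /\
  TyW f refine (g + Z.of_nat m * l1) W2.
Proof.
  intros Hv. pose proof Hv as [Sg [Bg [Se Ie]]].
  pose proof (len_pos' W1 N1) as P1. pose proof (len_pos' W2 N2) as P2. fold l1 l2 in P1, P2.
  pose proof lenV1 as LV.
  unfold V1 in Bg. apply Blk_app_inv in Bg. destruct Bg as [Bw Bl].
  rewrite len_wpow in Bl.
  split.
  - intros i Hi. split; [|split; [|split]].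
    + exists g, i. split; auto. split; auto. right. split; auto. lia.
    + apply Blk_wpow_inv with m; auto.
    + exists g, (Datatypes.S i). split; auto. split. fold l1. lia. right. split; auto.
    + intros z Hz Rz. destruct (Loc g V1 z Hv Rz) as [i' [Hi' [_ Ez]]].
      { fold l1 in Hz. split; [nia|]. rewrite LV. nia. }
      fold l1 in Hz. subst z. apply (no_mult_between (Z.of_nat i) (Z.of_nat i') l1); auto. nia.
  - split; [|split; [|split]].
    + exists g, m. split; [auto|split; [reflexivity|right; split; auto]].
    + auto.
    + apply S_refine. replace (g + Z.of_nat m * l1 + len W2)%Z with (g + len V1)%Z. auto. rewrite LV. fold l2. lia.
    + intros z Hz Rz. destruct (Loc g V1 z Hv Rz) as [i' [Hi' [_ Ez]]].
      { fold l2 in Hz. split; [nia|]. rewrite LV. lia. }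
      fold l2 in Hz. subst z. nia.
Qed.

Lemma R3b g : TyW f Sx g V2 -> TyW f refine g W1.
Proof.
  intros Hv. pose proof Hv as [Sg [Bg [Se Ie]]].
  pose proof (len_pos' W1 N1) as P1. pose proof (len_pos' W2 N2) as P2. fold l1 l2 in P1, P2.
  split; [apply S_refine; auto|]. split; auto. split; [apply S_refine; auto|].
  intros z Hz Rz. destruct (Loc g V2 z Hv Rz) as [i' [Hi' [Hv1 Ez]]]. auto.
  assert (E : V1 = V2) by (apply (TyW_eq f Sx g); auto; exact NV1).
  assert (len V1 = len V2) by (rewrite E; auto). rewrite lenV1 in H. unfold V2 in H. fold l1 in H. nia.
Qed.

Lemma TypeAt y : refine y -> exists g (i : nat), Sx g /\ y = (g + Z.of_nat i * l1)%Z /\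
  ((TyW f Sx g V1 /\ (i < m)%nat /\ TyW f refine y W1) \/
   (TyW f Sx g V1 /\ i = m /\ TyW f refine y W2) \/
   (i = 0%nat /\ TyW f Sx g V2 /\ TyW f refine y W1)).
Proof.
  intros [g [i [Sg [Ey Hi]]]]. exists g, i. split; auto. split; auto.
  assert (Case1 : TyW f Sx g V1 -> (i <= m)%nat -> 
    ((TyW f Sx g V1 /\ (i < m)%nat /\ TyW f refine y W1) \/ (TyW f Sx g V1 /\ i = m /\ TyW f refine y W2))).
  { intros hv hm. destruct (R3a g hv) as [A B]. destruct (Nat.lt_ge_cases i m).
    - left. subst. auto.
    - right. assert (i = m) by lia. subst. auto. }
  destruct Hi as [h0|[hm hv]].
  - destruct HS as [_ [HB _]]. destruct (HB g Sg) as [w [[e|e] Hw]]; subst w.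
    + destruct (Case1 Hw ltac:(lia)) as [A|A]; [left|right; left]; auto.
    + right; right. subst. split; auto. split; auto. rewrite Z.mul_0_l, Z.add_0_r. apply R3b; auto.
  - destruct (Case1 hv hm) as [A|A]; [left|right; left]; auto.
Qed.

Lemma pred_of f' T x w : TyW f' T x w -> w <> nil ->
  exists p, T p /\ (p < x + len w)%Z /\ forall z, (p < z < x + len w)%Z -> ~ T z.
Proof.
  intros [A [_ [_ D]]] N. exists x. split; auto. pose proof (len_pos' w N). split; [lia|]. auto.
Qed.

Lemma R4 : SP f W1 W2 refine.
Proof.
  pose proof (len_pos' W1 N1) as P1. pose proof (len_pos' W2 N2) as P2. fold l1 l2 in P1, P2.
  split; [|split].
  - destruct HS as [[x Hx] _]. exists x. apply S_refine; auto.
  - intros y Hy. destruct (TypeAt y Hy) as [g [i [Sg [Ey C]]]].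
    destruct C as [[_ [_ T]]|[[_ [_ T]]|[_ [_ T]]]]; [exists W1|exists W2|exists W1]; split; auto.
  - intros y Hy. destruct Hy as [g [i [Sg [Ey Hi]]]].
    destruct i as [|i].
    + rewrite Z.mul_0_l, Z.add_0_r in Ey. subst y.
      destruct HS as [_ [HB HP]]. destruct (HP g Sg) as [p [Sp [Hpg Ip]]].
      destruct (HB p Sp) as [w [Hw Tw]].
      assert (Nw : w <> nil) by (destruct Hw; subst; [exact NV1| exact N1]).
      assert (Ep : (p + len w = g)%Z).
      { pose proof (disj _ _ _ _ _ Tw Sg Hpg). pose proof (len_pos' w Nw).
        destruct (Z.eq_dec (p + len w) g); auto. exfalso. apply (Ip (p + len w)%Z). lia. apply Tw. }
      destruct Hw; subst w.
      * destruct (R3a p Tw) as [_ B]. destruct (pred_of _ _ _ _ B N2) as [q Hq].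
        exists q. replace g with (p + Z.of_nat m * l1 + len W2)%Z. auto. rewrite <- Ep, lenV1. fold l2. lia.
      * pose proof (R3b p Tw) as B. destruct (pred_of _ _ _ _ B N1) as [q Hq].
        exists q. rewrite <- Ep. auto.
    + destruct Hi as [h0|[hm hv]]; [discriminate|].
      destruct (R3a g hv) as [A _]. specialize (A i ltac:(lia)).
      destruct (pred_of _ _ _ _ A N1) as [q Hq]. exists q.
      replace y with (g + Z.of_nat i * l1 + len W1)%Z. auto. subst y. fold l1. lia.
Qed.

Definition Char (T : Z -> Prop) (x : Z) : Prop :=
  T x /\ ~ exists k : nat, (k < m)%nat /\ TyW f T (x + Z.of_nat k * l1)%Z W2.

Lemma R5 x : Sx x <-> Char refine x.
Proof.
  pose proof (len_pos' W1 N1) as P1. pose proof (len_pos' W2 N2) as P2. fold l1 l2 in P1, P2.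
  split.
  - intros HSx. split; [apply S_refine; auto|]. intros [k [Hk Tk]].
    assert (Ry : refine (x + Z.of_nat k * l1)%Z) by apply Tk.
    destruct (TypeAt _ Ry) as [g [i [Sg [Ey C]]]].
    destruct C as [[_ [_ T]]|[[Tv [Ei T]]|[_ [_ T]]]];
      try (apply D12; apply (TyW_eq f refine (x + Z.of_nat k * l1)%Z); auto; fail).
    subst i. assert (Hgx : (g < x)%Z) by nia.
    pose proof (disj _ _ _ _ _ Tv HSx Hgx). rewrite lenV1 in H. fold l2 in H. lia.
  - intros [Rx Nc]. apply NNPP. intros NSx. apply Nc.
    destruct Rx as [g [i [Sg [Ex Hi]]]].
    destruct Hi as [h0|[hm hv]].
    + subst. rewrite Z.mul_0_l, Z.add_0_r in NSx. contradiction.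
    + destruct i as [|i]. { subst. rewrite Z.mul_0_l, Z.add_0_r in NSx. contradiction. }
      exists (m - Datatypes.S i)%nat. split; [lia|].
      destruct (R3a g hv) as [_ B]. replace (x + Z.of_nat (m - Datatypes.S i) * l1)%Z with (g + Z.of_nat m * l1)%Z. auto.
      subst x. nia.
Qed.

End Step.

Lemma step_uniq f W1 W2 m : W1 <> nil -> W2 <> nil -> W1 <> W2 ->
  (forall T1 T2, SP f W1 W2 T1 -> SP f W1 W2 T2 -> forall x, T1 x <-> T2 x) ->
  forall S1 S2, SP f (wpow W1 m ++ W2) W1 S1 -> SP f (wpow W1 m ++ W2) W1 S2 -> forall x, S1 x <-> S2 x.
Proof.
  intros N1 N2 D IH S1 S2 H1 H2 x.
  pose proof (R4 f W1 W2 m N1 N2 S1 H1) as R1.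
  pose proof (R4 f W1 W2 m N1 N2 S2 H2) as R2.
  pose proof (IH _ _ R1 R2) as E.
  rewrite (R5 f W1 W2 m N1 N2 D S1 H1 x), (R5 f W1 W2 m N1 N2 D S2 H2 x).
  unfold Char. split; intros [A B]; split.
  - apply E; auto.
  - intros [k [Hk Tk]]. apply B. exists k. split; auto. eapply TyW_ext; [|exact Tk]. intros y; split; apply E.
  - apply E; auto.
  - intros [k [Hk Tk]]. apply B. exists k. split; auto. eapply TyW_ext; [|exact Tk]. intros y; split; apply E.
Qed.

Lemma base_full f W1 W2 SS : length W1 = 1%nat -> length W2 = 1%nat -> SP f W1 W2 SS -> forall x, SS x.
Proof.
  intros L1 L2 [[x0 H0] [HB HP]].
  assert (Up : forall x, SS x -> SS (x + 1)%Z).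
  { intros x Hx. destruct (HB x Hx) as [w [Hw [_ [_ [E _]]]]]. unfold len in E.
    destruct Hw; subst; rewrite ?L1, ?L2 in E; simpl in E; auto. }
  assert (Down : forall x, SS x -> SS (x - 1)%Z).
  { intros y Hy. destruct (HP y Hy) as [p [Sp [Hpy Ip]]].
    destruct (Z.eq_dec p (y - 1)) as [e|e]. subst; auto.
    exfalso. apply (Ip (p + 1)%Z). lia. apply Up. auto. }
  assert (All : forall n : nat, SS (x0 + Z.of_nat n)%Z /\ SS (x0 - Z.of_nat n)%Z).
  { induction n as [|n [A B]]. simpl. rewrite Z.add_0_r, Z.sub_0_r. auto.
    split. replace (x0 + Z.of_nat (Datatypes.S n))%Z with (x0 + Z.of_nat n + 1)%Z by lia. auto.
    replace (x0 - Z.of_nat (Datatypes.S n))%Z with (x0 - Z.of_nat n - 1)%Z by lia. auto. }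
  intros x. destruct (Z_le_gt_dec x0 x).
  - replace x with (x0 + Z.of_nat (Z.to_nat (x - x0)))%Z by lia. apply All.
  - replace x with (x0 - Z.of_nat (Z.to_nat (x0 - x)))%Z by lia. apply All.
Qed.

Lemma uniq_sets alpha f : forall n S1 S2, SP f (s alpha n) (s_prev alpha n) S1 ->
  SP f (s alpha n) (s_prev alpha n) S2 -> forall x, S1 x <-> S2 x.
Proof.
  induction n as [|n IH]; intros S1 S2 H1 H2 x.
  - unfold s, s_prev in *; simpl in *. split; intros _.
    apply (base_full f _ _ S2 (eq_refl : length (0%nat :: nil) = 1%nat) (eq_refl : length (1%nat :: nil) = 1%nat) H2). apply (base_full f _ _ S1 (eq_refl : length (0%nat :: nil) = 1%nat) (eq_refl : length (1%nat :: nil) = 1%nat) H1).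
  - destruct (s_S alpha n) as [E1 E2]. rewrite E1, E2 in H1, H2.
    destruct (words_ok alpha n) as [N1 [N2 _]].
    apply (step_uniq f (s alpha n) (s_prev alpha n) (cnt alpha n)); auto.
    apply words_neq.
Qed.

Lemma smono (d : Z -> Z) : (forall j, d j < d (j + 1))%Z -> forall j k, (j < k)%Z -> (d j < d k)%Z.
Proof.
  intros H j k Hjk. pose proof (mono d H (j+1)%Z k ltac:(lia)). specialize (H j). lia.
Qed.

Lemma part_SP n alpha f d z : is_partition n alpha f d z ->
  SP f (s alpha n) (s_prev alpha n) (fun x => exists j, d j = x).
Proof.
  intros [Hinc [Hz [H0 Hb]]].
  pose proof (smono d Hinc) as Sm.
  assert (Free : forall j y, (d j < y < d (j+1))%Z -> ~ exists k, d k = y).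
  { intros j y Hy [k Ek]. subst y. destruct (Z_le_gt_dec k j).
    - destruct (Z.eq_dec k j). subst; lia. pose proof (Sm k j ltac:(lia)). lia.
    - destruct (Z.eq_dec k (j+1)). subst; lia. pose proof (Sm (j+1)%Z k ltac:(lia)). lia. }
  split; [|split].
  - exists (d 0%Z), 0%Z. auto.
  - intros x [j Ej]. subst x. exists (z j). split; [destruct (Hz j); auto|].
    destruct (Hb j) as [L B]. unfold TyW, len. rewrite L.
    split; [eauto|]. split; [exact B|]. split.
    + exists (j+1)%Z. lia.
    + intros y Hy. apply (Free j). lia.
  - intros y [j Ej]. subst y. exists (d (j - 1)%Z). split; [eauto|].
    pose proof (Hinc (j-1)%Z). replace (j - 1 + 1)%Z with j in * by lia. split; auto.
    intros y Hy. apply (Free (j-1)%Z). replace (j - 1 + 1)%Z with j by lia. auto.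
Qed.

Lemma enum_uniq (d d' : Z -> Z) : (forall j, d j < d (j + 1))%Z -> (forall j, d' j < d' (j + 1))%Z ->
  (d 0 <= 0 < d 1)%Z -> (d' 0 <= 0 < d' 1)%Z ->
  (forall x, (exists j, d j = x) <-> (exists j, d' j = x)) -> forall j, d j = d' j.
Proof.
  intros I I' H0 H0' E.
  pose proof (smono d I) as S. pose proof (smono d' I') as S'.
  assert (Le : forall j k, (d j <= d k)%Z -> (j <= k)%Z).
  { intros j k h. destruct (Z_le_gt_dec j k); auto. pose proof (S k j ltac:(lia)). lia. }
  assert (Le' : forall j k, (d' j <= d' k)%Z -> (j <= k)%Z).
  { intros j k h. destruct (Z_le_gt_dec j k); auto. pose proof (S' k j ltac:(lia)). lia. }
  assert (B0 : d 0%Z = d' 0%Z).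
  { destruct (proj1 (E (d 0%Z)) (ex_intro _ 0%Z eq_refl)) as [k Ek].
    destruct (proj2 (E (d' 0%Z)) (ex_intro _ 0%Z eq_refl)) as [l El].
    assert (k <= 0)%Z. { destruct (Z_le_gt_dec k 0); auto. pose proof (S' 0%Z k ltac:(lia)).
      destruct (Z.eq_dec k 1). subst; lia. pose proof (S' 1%Z k ltac:(lia)). lia. }
    assert (l <= 0)%Z. { destruct (Z_le_gt_dec l 0); auto.
      destruct (Z.eq_dec l 1). subst; lia. pose proof (S 1%Z l ltac:(lia)). lia. }
    assert (d' k <= d' 0)%Z by (apply (mono d' I'); auto).
    assert (d l <= d 0)%Z by (apply (mono d I); auto). lia. }
  assert (Up : forall j, d j = d' j -> d (j+1)%Z = d' (j+1)%Z).
  { intros j h.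
    destruct (proj1 (E (d (j+1)%Z)) (ex_intro _ _ eq_refl)) as [k Ek].
    destruct (proj2 (E (d' (j+1)%Z)) (ex_intro _ _ eq_refl)) as [l El].
    pose proof (I j) as Ij. pose proof (I' j) as Ij'.
    assert (Hk : (j + 1 <= k)%Z).
    { destruct (Z_le_gt_dec (j+1) k) as [x|x]; auto. pose proof (mono d' I' k j ltac:(lia)). lia. }
    assert (Hl : (j + 1 <= l)%Z).
    { destruct (Z_le_gt_dec (j+1) l) as [x|x]; auto. pose proof (mono d I l j ltac:(lia)). lia. }
    pose proof (mono d' I' _ _ Hk). pose proof (mono d I _ _ Hl). lia. }
  assert (Down : forall j, d j = d' j -> d (j-1)%Z = d' (j-1)%Z).
  { intros j h.
    destruct (proj1 (E (d (j-1)%Z)) (ex_intro _ _ eq_refl)) as [k Ek].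
    destruct (proj2 (E (d' (j-1)%Z)) (ex_intro _ _ eq_refl)) as [l El].
    pose proof (I (j-1)%Z) as Ij. pose proof (I' (j-1)%Z) as Ij'.
    replace (j - 1 + 1)%Z with j in Ij, Ij' by lia.
    assert (Hk : (k <= j - 1)%Z).
    { destruct (Z_le_gt_dec k (j-1)) as [x|x]; auto. pose proof (mono d' I' j k ltac:(lia)). lia. }
    assert (Hl : (l <= j - 1)%Z).
    { destruct (Z_le_gt_dec l (j-1)) as [x|x]; auto. pose proof (mono d I j l ltac:(lia)). lia. }
    pose proof (mono d' I' _ _ Hk). pose proof (mono d I _ _ Hl). lia. }
  intros j. induction j using Z.peano_ind.
  - auto.
  - rewrite <- Z.add_1_r. auto.
  - rewrite <- Z.sub_1_r. auto.
Qed.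

Lemma uniq_part n alpha f d z d' z' : is_partition n alpha f d z -> is_partition n alpha f d' z' ->
  (forall j, d j = d' j) /\ (forall j, z j = z' j).
Proof.
  intros P P'.
  pose proof (part_SP _ _ _ _ _ P) as S1. pose proof (part_SP _ _ _ _ _ P') as S2.
  pose proof (uniq_sets alpha f n _ _ S1 S2) as E.
  destruct P as [I [Z1 [H0 B]]]. destruct P' as [I' [Z1' [H0' B']]].
  assert (Ed : forall j, d j = d' j) by (apply enum_uniq; auto).
  split; auto. intros j. destruct (B j) as [L1 B1]. destruct (B' j) as [L2 B2].
  apply (blk_eq f (d j)); auto.
  - rewrite Ed. exact B2.
  - rewrite !Ed in L1. lia.
Qed.


Theorem lemma3p2 (alpha : R) (Ha : 0 < alpha < 1) (Hirr : irrational alpha) :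
  (forall n : nat, unique_partition n alpha (v alpha 0)) /\
  (forall (n : nat) (theta : R), 0 <= theta < 1 ->
     unique_partition n alpha (v alpha theta)).
Proof.
  split.
  - intros n. split.
    + apply exist_part; auto.
    + intros d z d' z' P P'. eapply uniq_part; eauto.
  - intros n theta _. split.
    + apply exist_part; auto.
    + intros d z d' z' P P'. eapply uniq_part; eauto.
Qed.
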